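(* The function $\widetilde{M_f}$ defined in the context satisfies $\lim_{r\to+\infty}\widetilde{M_f}(r)=-\infty$.
   Context: For $r>\frac23$ let $u_b(r)\in(\frac65,\frac43)$ be the unique $u\in(\frac65,\frac43)$ with $2-u+2q(1-u)=0$ at $q=1+\sqrt{\frac{r+u-2}{r+0.1}}$. Set $q_{f,\pm}(r)=1\pm\sqrt{\frac{r}{r+0.1}}$, $q_{b,\pm}(r)=1\pm\sqrt{\frac{r+u_b(r)-2}{r+0.1}}$, $S(r)=(q_{f,+}-2q_{f,-})+(q_{b,+}-2q_{b,-})$ and $D_0(r)=\frac{2(2-u_b(r))^2}{(r+0.1)S(r)^2}$ (equivalently, $D_0(r)>0$ together with some $\mu_0(r)$ solves $2+\mu=\frac12\sqrt{2D(r+0.1)}(q_{f,+}-2q_{f,-})$ and $u_b+\mu=-\frac12\sqrt{2D(r+0.1)}(q_{b,+}-2q_{b,-})$). Let $\phi(\chi)=(1+e^{-\frac{\sqrt2}{2}\chi})^{-1}$, $\kappa_f(r)=\frac12-\frac{q_{f,-}(r)}{q_{f,+}(r)}$ and $$\widetilde{M_f}(r)=-q_{f,+}(r)\sqrt{\frac{r+0.1}{D_0(r)}}\int_{-\infty}^{\infty}e^{-\sqrt2\kappa_f(r)\chi}\phi'(\chi)^2d\chi+\int_{-\infty}^{\infty}e^{-\sqrt2\kappa_f(r)\chi}\phi'(\chi)\phi(\chi)d\chi .$$ *)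

(* Defs.v *)
From Stdlib Require Import Reals ClassicalEpsilon.
From Coquelicot Require Import Coquelicot.
Open Scope R_scope.

Definition c01 : R := 1 / 10.

Definition q_of (r u : R) : R := 1 + sqrt ((r + u - 2) / (r + c01)).

Definition ub_prop (r u : R) : Prop :=
  6/5 < u < 4/3 /\ 2 - u + 2 * q_of r u * (1 - u) = 0.

(* u_b(r): the (unique, for r > 2/3) u in (6/5,4/3) with the property;
   chosen by Hilbert's epsilon (value irrelevant where no such u exists). *)
Definition u_b (r : R) : R := epsilon (inhabits 0) (ub_prop r).

Definition q_fp (r : R) : R := 1 + sqrt (r / (r + c01)).
Definition q_fm (r : R) : R := 1 - sqrt (r / (r + c01)).
Definition q_bp (r : R) : R := 1 + sqrt ((r + u_b r - 2) / (r + c01)).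
Definition q_bm (r : R) : R := 1 - sqrt ((r + u_b r - 2) / (r + c01)).

Definition S_ (r : R) : R := (q_fp r - 2 * q_fm r) + (q_bp r - 2 * q_bm r).

Definition D0 (r : R) : R :=
  2 * (2 - u_b r) ^ 2 / ((r + c01) * (S_ r) ^ 2).

Definition phi (chi : R) : R := / (1 + exp (- (sqrt 2 / 2) * chi)).

Definition kappa_f (r : R) : R := 1/2 - q_fm r / q_fp r.

Definition int_R (f : R -> R) : R :=
  RInt_gen f (Rbar_locally m_infty) (Rbar_locally p_infty).

Definition Mf_tilde (r : R) : R :=
  - q_fp r * sqrt ((r + c01) / D0 r)
      * int_R (fun chi => exp (- sqrt 2 * kappa_f r * chi) * (Derive phi chi) ^ 2)
  + int_R (fun chi => exp (- sqrt 2 * kappa_f r * chi) * Derive phi chi * phi chi).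

(* Main.v *)
Require Import Defs.
From Stdlib Require Import Reals Lra ClassicalEpsilon.
From Coquelicot Require Import Coquelicot.
Open Scope R_scope.

Lemma gen_int (f : R -> R) (M : R) :
  (forall a b, ex_RInt f a b) -> (forall x, 0 <= f x) ->
  (forall a b, a <= b -> RInt f a b <= M) ->
  exists L, is_RInt_gen f (Rbar_locally m_infty) (Rbar_locally p_infty) L
    /\ L <= M /\ (forall a b, a <= b -> RInt f a b <= L).
Proof.
  intros Hex Hpos HM.
  set (Es := fun y => exists a b, a <= b /\ y = RInt f a b).
  destruct (completeness Es) as [L [HL1 HL2]].
  { exists M. intros y [a [b [Hab ->]]]. now apply HM. }
  { exists (RInt f 0 0), 0, 0. split; [lra|reflexivity]. }
  assert (Hmono : forall a a0 b0 b, a <= a0 -> a0 <= b0 -> b0 <= b ->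
            RInt f a0 b0 <= RInt f a b).
  { intros a a0 b0 b H1 H2 H3.
    rewrite <- (RInt_Chasles f a a0 b) by auto.
    rewrite <- (RInt_Chasles f a0 b0 b) by auto.
    assert (0 <= RInt f a a0) by (apply RInt_ge_0; auto).
    assert (0 <= RInt f b0 b) by (apply RInt_ge_0; auto).
    unfold plus; simpl; lra. }
  exists L. split; [|split].
  - intros P [eps Heps].
    assert (Hne : exists a0 b0, a0 <= b0 /\ L - eps < RInt f a0 b0).
    { apply NNPP. intro Hn.
      assert (L <= L - eps).
      { apply HL2. intros y [a [b [Hab ->]]].
        apply Rnot_lt_le. intro Hl. apply Hn. now exists a, b. }
      destruct eps; simpl in *; lra. }
    destruct Hne as [a0 [b0 [Hab0 Hlt]]].
    exists (fun a => a < a0) (fun b => b0 < b).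
    + exists a0. auto.
    + exists b0. auto.
    + intros a b Ha Hb. exists (RInt f a b). split.
      * exact (RInt_correct f a b (Hex a b)).
      * apply Heps. change (Rabs (RInt f a b - L) < eps).
        assert (RInt f a0 b0 <= RInt f a b) by (apply Hmono; lra).
        assert (RInt f a b <= L) by (apply HL1; exists a, b; split; [lra|auto]).
        apply Rabs_def1; destruct eps; simpl in *; lra.
  - apply HL2. intros y [a [b [Hab ->]]]. now apply HM.
  - intros a b Hab. apply HL1. now exists a, b.
Qed.

Definition E (x : R) := exp (- (sqrt 2 / 2) * x).
Definition dphi (x : R) := sqrt 2 / 2 * E x / (1 + E x) ^ 2.

Lemma E_pos x : 0 < E x.
Proof. apply exp_pos. Qed.

Lemma phi_is_derive x : is_derive phi x (dphi x).
Proof.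
  unfold phi, dphi, E. pose proof (exp_pos (- (sqrt 2 / 2) * x)).
  auto_derive. lra. field. lra.
Qed.

Lemma Derive_phi x : Derive phi x = dphi x.
Proof. apply is_derive_unique, phi_is_derive. Qed.

Lemma dphi_cont x : continuous dphi x.
Proof.
  apply (ex_derive_continuous (K:=R_AbsRing) (V:=R_NormedModule)). unfold dphi, E.
  pose proof (exp_pos (- (sqrt 2 / 2) * x)).
  auto_derive. apply Rmult_integral_contrapositive; split; lra.
Qed.

Lemma sqrt2_bounds : 1 < sqrt 2 < 2.
Proof.
  split.
  - rewrite <- sqrt_1. apply sqrt_lt_1; lra.
  - assert (H4 : sqrt 4 = 2) by (replace 4 with (2*2) by lra; apply sqrt_square; lra).
    rewrite <- H4 at 2. apply sqrt_lt_1; lra.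
Qed.

Lemma RInt_dphi a b : RInt dphi a b = phi b - phi a.
Proof.
  apply is_RInt_unique.
  apply (is_RInt_derive phi dphi a b).
  - intros; apply phi_is_derive.
  - intros; apply dphi_cont.
Qed.

Lemma phi_bounds x : 0 < phi x < 1.
Proof.
  unfold phi. pose proof (exp_pos (- (sqrt 2 / 2) * x)).
  split.
  - apply Rinv_0_lt_compat; lra.
  - rewrite <- Rinv_1. apply Rinv_lt_contravar; lra.
Qed.

Lemma exp_bound k x : 0 <= k <= 1/2 -> exp (- sqrt 2 * k * x) <= 1 + E x.
Proof.
  intros Hk. unfold E. set (y := - (sqrt 2 / 2) * x).
  replace (- sqrt 2 * k * x) with (2 * k * y) by (unfold y; field).
  pose proof (exp_pos y).
  destruct (Rle_dec y 0).
  - assert (exp (2*k*y) <= exp 0).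
    { destruct (Req_dec (2*k*y) 0) as [->|]; [lra|].
      left; apply exp_increasing. nra. }
    rewrite exp_0 in H0. lra.
  - assert (exp (2*k*y) <= exp y).
    { destruct (Req_dec (2*k*y) y) as [->|]; [lra|].
      left; apply exp_increasing. nra. }
    lra.
Qed.

Definition f1 k := fun chi => exp (- sqrt 2 * k * chi) * Derive phi chi ^ 2.
Definition f2 k := fun chi => exp (- sqrt 2 * k * chi) * Derive phi chi * phi chi.

Lemma f1_ex k a b : ex_RInt (f1 k) a b.
Proof.
  apply (ex_RInt_ext (fun chi => exp (- sqrt 2 * k * chi) * dphi chi ^ 2)).
  { intros; unfold f1; now rewrite Derive_phi. }
  apply (ex_RInt_continuous (V:=R_CompleteNormedModule)). intros z _.
  apply (ex_derive_continuous (K:=R_AbsRing) (V:=R_NormedModule)). unfold dphi, E.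
  pose proof (exp_pos (- (sqrt 2 / 2) * z)).
  auto_derive. apply Rmult_integral_contrapositive; split; lra.
Qed.

Lemma f2_ex k a b : ex_RInt (f2 k) a b.
Proof.
  apply (ex_RInt_ext (fun chi => exp (- sqrt 2 * k * chi) * dphi chi * phi chi)).
  { intros; unfold f2; now rewrite Derive_phi. }
  apply (ex_RInt_continuous (V:=R_CompleteNormedModule)). intros z _.
  apply (ex_derive_continuous (K:=R_AbsRing) (V:=R_NormedModule)). unfold dphi, E, phi.
  pose proof (exp_pos (- (sqrt 2 / 2) * z)).
  auto_derive. split. apply Rmult_integral_contrapositive; split; lra. lra.
Qed.

Lemma dphi_nonneg x : 0 <= dphi x.
Proof.
  unfold dphi. pose proof (E_pos x). pose proof sqrt2_bounds.
  apply Rmult_le_pos; [|left; apply Rinv_0_lt_compat; apply pow_lt; lra].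
  nra.
Qed.

Lemma f1_bounds k x : 0 <= k <= 1/2 -> 0 <= f1 k x <= dphi x.
Proof.
  intros Hk. unfold f1. rewrite Derive_phi.
  pose proof (exp_bound k x Hk). pose proof (exp_pos (- sqrt 2 * k * x)).
  pose proof (dphi_nonneg x). pose proof (E_pos x). pose proof sqrt2_bounds.
  assert (Hd : (1 + E x) * dphi x <= 1).
  { unfold dphi. replace ((1 + E x) * (sqrt 2 / 2 * E x / (1 + E x) ^ 2))
      with (sqrt 2 / 2 * (E x / (1 + E x))) by (field; lra).
    assert (E x / (1 + E x) <= 1).
    { apply (Rmult_le_reg_r (1 + E x)); [lra|].
      replace (E x / (1 + E x) * (1 + E x)) with (E x) by (field; lra). lra. }
    assert (0 <= E x / (1 + E x)) by (apply Rle_mult_inv_pos; lra).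
    nra. }
  split.
  - apply Rmult_le_pos; [lra|]. apply pow2_ge_0.
  - assert (exp (- sqrt 2 * k * x) * dphi x <= 1) by nra.
    replace (dphi x ^ 2) with (dphi x * dphi x) by ring. nra.
Qed.

Lemma f2_bounds k x : 0 <= k <= 1/2 -> 0 <= f2 k x <= dphi x.
Proof.
  intros Hk. unfold f2. rewrite Derive_phi.
  pose proof (exp_bound k x Hk). pose proof (exp_pos (- sqrt 2 * k * x)).
  pose proof (dphi_nonneg x). pose proof (E_pos x). pose proof (phi_bounds x).
  assert (Hp : (1 + E x) * phi x = 1).
  { unfold phi, E in *. field. pose proof (exp_pos (- (sqrt 2 / 2) * x)). lra. }
  split.
  - apply Rmult_le_pos; [|lra]. apply Rmult_le_pos; lra.
  - assert (exp (- sqrt 2 * k * x) * phi x <= 1) by nra. nra.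
Qed.

Lemma RInt_dphi_le1 a b : RInt dphi a b <= 1.
Proof. rewrite RInt_dphi. pose proof (phi_bounds a). pose proof (phi_bounds b). lra. Qed.

Lemma dphi_ex a b : ex_RInt dphi a b.
Proof. apply (ex_RInt_continuous (V:=R_CompleteNormedModule)). intros; apply dphi_cont. Qed.

Definition cst := exp (-1) * (sqrt 2 / 2 * exp (-1) / 4) ^ 2.

Lemma I2_bound k : 0 <= k <= 1/2 -> int_R (f2 k) <= 1.
Proof.
  intros Hk.
  destruct (gen_int (f2 k) 1) as [L [HL [HL1 _]]].
  - apply f2_ex.
  - intros; apply f2_bounds; auto.
  - intros a b Hab. eapply Rle_trans; [|apply (RInt_dphi_le1 a b)].
    apply RInt_le; auto. apply f2_ex. apply dphi_ex.
    intros; apply f2_bounds; auto.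
  - unfold int_R. rewrite (is_RInt_gen_unique _ _ HL). auto.
Qed.

Lemma I1_bound k : 0 <= k <= 1/2 -> cst <= int_R (f1 k).
Proof.
  intros Hk.
  destruct (gen_int (f1 k) 1) as [L [HL [_ HL2]]].
  - apply f1_ex.
  - intros; apply f1_bounds; auto.
  - intros a b Hab. eapply Rle_trans; [|apply (RInt_dphi_le1 a b)].
    apply RInt_le; auto. apply f1_ex. apply dphi_ex.
    intros; apply f1_bounds; auto.
  - unfold int_R. rewrite (is_RInt_gen_unique _ _ HL).
    eapply Rle_trans; [|apply (HL2 0 1); lra].
    replace cst with (RInt (fun _ => cst) 0 1).
    2:{ rewrite RInt_const. unfold scal; simpl; unfold mult; simpl. ring. }
    apply RInt_le; [lra| apply ex_RInt_const | apply f1_ex |].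
    intros x Hx. unfold f1, cst. rewrite Derive_phi.
    pose proof sqrt2_bounds.
    assert (Hex : exp (-1) <= exp (- sqrt 2 * k * x)).
    { destruct (Req_dec (-1) (- sqrt 2 * k * x)) as [<-|]; [lra|].
      left; apply exp_increasing. assert (sqrt 2 * k <= 1) by nra. assert (0 <= sqrt 2 * k) by nra. assert (sqrt 2 * k * x <= 1) by nra. lra. }
    assert (HE1 : exp (-1) <= E x).
    { unfold E. destruct (Req_dec (-1) (- (sqrt 2/2) * x)) as [<-|]; [lra|].
      left; apply exp_increasing. nra. }
    assert (HE2 : E x <= 1).
    { unfold E. rewrite <- exp_0. destruct (Req_dec (- (sqrt 2/2) * x) 0) as [->|]; [lra|].
      left; apply exp_increasing. nra. }
    assert (Hd : sqrt 2 / 2 * exp (-1) / 4 <= dphi x).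
    { unfold dphi. pose proof (exp_pos (-1)).
      apply (Rmult_le_reg_r ((1 + E x)^2)); [apply pow_lt; lra|].
      replace (sqrt 2 / 2 * E x / (1 + E x) ^ 2 * (1 + E x) ^ 2) with (sqrt 2 / 2 * E x) by (field; lra).
      assert ((1 + E x)^2 <= 4) by nra. 
      assert (0 < sqrt 2 / 2 * exp (-1) / 4) by (apply Rdiv_lt_0_compat; nra).
      nra. }
    assert (0 < sqrt 2 / 2 * exp (-1) / 4) by (pose proof (exp_pos (-1)); apply Rdiv_lt_0_compat; nra).
    pose proof (exp_pos (-1)).
    apply Rmult_le_compat; try lra.
    + apply pow2_ge_0.
    + apply pow_incr. lra.
Qed.

Lemma sqrt_ge_half x : 1/4 <= x -> 1/2 <= sqrt x.
Proof.
  intros H. rewrite <- (sqrt_pow2 (1/2)) by lra. apply sqrt_le_1_alt. lra.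
Qed.

Lemma sqrt_le_one x : x <= 1 -> sqrt x <= 1.
Proof. intros H. rewrite <- sqrt_1. apply sqrt_le_1_alt. lra. Qed.

Lemma ub_exists r : 2 <= r -> exists u, ub_prop r u.
Proof.
  intros Hr.
  set (h := fun u => 2 - u + 2 * q_of r u * (1 - u)).
  assert (Hc : forall x, continuous h x).
  { intros x. unfold h, q_of.
    apply (continuous_plus (K:=R_AbsRing) (V:=R_NormedModule)).
    - apply (continuous_minus (K:=R_AbsRing) (V:=R_NormedModule)).
      apply continuous_const. apply continuous_id.
    - apply (continuous_mult (K:=R_AbsRing)).
      + apply (continuous_mult (K:=R_AbsRing)). apply continuous_const.
        apply (continuous_plus (K:=R_AbsRing) (V:=R_NormedModule)). apply continuous_const.
        apply continuous_sqrt_comp.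
        apply (continuous_mult (K:=R_AbsRing)).
        * apply (continuous_minus (K:=R_AbsRing) (V:=R_NormedModule)).
          apply (continuous_plus (K:=R_AbsRing) (V:=R_NormedModule)).
          apply continuous_const. apply continuous_id. apply continuous_const.
        * apply continuous_const.
      + apply (continuous_minus (K:=R_AbsRing) (V:=R_NormedModule)).
        apply continuous_const. apply continuous_id. }
  unfold c01 in *.
  assert (H1 : 0 < h (6/5)).
  { unfold h, q_of, c01.
    assert (sqrt ((r + 6/5 - 2) / (r + 1/10)) < 1).
    { apply Rlt_le_trans with (sqrt 1); [|rewrite sqrt_1; lra]. apply sqrt_lt_1.
      left; apply Rdiv_lt_0_compat; lra. lra.
      apply (Rmult_lt_reg_r (r + 1/10)); [lra|].
      field_simplify; lra. }
    lra. }
  assert (H2 : h (4/3) < 0).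
  { unfold h, q_of, c01.
    assert (0 < sqrt ((r + 4/3 - 2) / (r + 1/10))).
    { apply sqrt_lt_R0. apply Rdiv_lt_0_compat; lra. }
    lra. }
  destruct (IVT_gen_consistent h (6/5) (4/3) 0 Hc) as [z [Hz Hhz]].
  { rewrite Rmin_right, Rmax_left; lra. }
  rewrite Rmin_left, Rmax_right in Hz by lra.
  exists z. split; [|exact Hhz].
  split; destruct (Req_dec z (6/5)); destruct (Req_dec z (4/3)); subst; lra.
Qed.

Lemma ub_bounds r : 2 <= r -> 6/5 < u_b r < 4/3.
Proof.
  intros Hr. unfold u_b.
  destruct (epsilon_spec (inhabits 0) (ub_prop r) (ub_exists r Hr)) as [H _].
  exact H.
Qed.

Lemma kappa_bounds r : 2 <= r -> 0 <= kappa_f r <= 1/2.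
Proof.
  intros Hr. unfold kappa_f, q_fm, q_fp, c01.
  set (s := sqrt (r / (r + 1/10))).
  assert (Hs1 : 1/2 <= s).
  { apply sqrt_ge_half. apply (Rmult_le_reg_r (r + 1/10)); [lra|].
    field_simplify; lra. }
  assert (Hs2 : s <= 1).
  { apply sqrt_le_one. apply (Rmult_le_reg_r (r + 1/10)); [lra|].
    field_simplify; lra. }
  assert (0 <= (1 - s) / (1 + s)) by (apply Rdiv_le_0_compat; lra).
  assert ((1 - s) / (1 + s) <= 1/2).
  { apply (Rmult_le_reg_r (1 + s)); [lra|]. field_simplify; lra. }
  lra.
Qed.

Lemma A_bound r : 2 <= r -> r / 2 <= q_fp r * sqrt ((r + c01) / D0 r).
Proof.
  intros Hr. pose proof (ub_bounds r Hr) as Hu.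
  set (u := u_b r) in *.
  set (s1 := sqrt (r / (r + c01))).
  set (s2 := sqrt ((r + u - 2) / (r + c01))).
  unfold c01 in *.
  assert (Hs1 : 1/2 <= s1).
  { apply sqrt_ge_half. apply (Rmult_le_reg_r (r + 1/10)); [lra|].
    field_simplify; lra. }
  assert (Hs2 : 1/2 <= s2).
  { apply sqrt_ge_half. apply (Rmult_le_reg_r (r + 1/10)); [lra|].
    field_simplify; lra. }
  assert (HS : S_ r = -2 + 3 * s1 + 3 * s2).
  { unfold S_, q_fp, q_fm, q_bp, q_bm, c01. fold u. fold s1 s2. ring. }
  assert (HX : (r + 1/10) / D0 r = (r + 1/10)^2 * (S_ r)^2 / (2 * (2 - u)^2)).
  { assert (S_ r <> 0) by (rewrite HS; lra).
    unfold D0, c01. fold u. field. repeat split; lra. }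
  unfold c01 in *.
  assert (Hq : 1 <= q_fp r).
  { unfold q_fp, c01. fold s1. lra. }
  assert (Hsq : r / 2 <= sqrt ((r + 1/10) / D0 r)).
  { rewrite <- (sqrt_pow2 (r/2)) by lra. apply sqrt_le_1_alt.
    rewrite HX. rewrite HS.
    apply (Rmult_le_reg_r (2 * (2 - u)^2)); [nra|].
    field_simplify; [|lra].
    assert (1 <= -2 + 3 * s1 + 3 * s2) by lra.
    assert (1 <= (-2 + 3 * s1 + 3 * s2)^2) by nra.
    assert ((2-u)^2 <= 1) by nra.
    assert (r^2 <= (r + 1/10)^2) by nra.
    nra. }
  assert (0 <= sqrt ((r + 1/10) / D0 r)) by apply sqrt_pos.
  nra.
Qed.

Theorem theorem4 : is_lim Mf_tilde p_infty m_infty.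
Proof.
  apply (is_lim_le_m_loc (fun r => - (r / 2) * cst + 1)).
  - exists 2. intros r Hr.
    pose proof (kappa_bounds r ltac:(lra)) as Hk.
    pose proof (I1_bound _ Hk) as H1. pose proof (I2_bound _ Hk) as H2.
    pose proof (A_bound r ltac:(lra)) as HA.
    unfold f1, f2 in *. unfold Mf_tilde.
    assert (Hc : 0 < cst).
    { unfold cst. pose proof (exp_pos (-1)). pose proof sqrt2_bounds.
      apply Rmult_lt_0_compat; [lra|]. apply pow_lt. apply Rdiv_lt_0_compat; nra. }
    set (I1 := int_R (fun chi => exp (- sqrt 2 * kappa_f r * chi) * Derive phi chi ^ 2)) in *.
    set (I2 := int_R (fun chi => exp (- sqrt 2 * kappa_f r * chi) * Derive phi chi * phi chi)) in *.
    set (A := q_fp r * sqrt ((r + c01) / D0 r)) in *.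
    replace (- q_fp r * sqrt ((r + c01) / D0 r) * I1 + I2) with (- (A * I1) + I2)
      by (unfold A; ring).
    assert (0 <= r/2) by lra.
    assert (r / 2 * cst <= A * I1) by (apply Rmult_le_compat; lra).
    lra.
  - apply is_lim_spec. intros M. simpl.
    assert (Hc : 0 < cst).
    { unfold cst. pose proof (exp_pos (-1)). pose proof sqrt2_bounds.
      apply Rmult_lt_0_compat; [lra|]. apply pow_lt. apply Rdiv_lt_0_compat; nra. }
    exists (Rabs ((1 - M) * 2 / cst)). intros r Hr.
    pose proof (Rle_abs ((1 - M) * 2 / cst)).
    assert ((1 - M) * 2 / cst * cst < r * cst) by (apply Rmult_lt_compat_r; lra).
    replace ((1 - M) * 2 / cst * cst) with ((1 - M) * 2) in H0 by (field; lra).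
    lra.
Qed.
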